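(* For disjunctive guarded systems of type $(A,B)$, considering only runs that are strong-fair or finite: for all $n\ge|B|+1$, if $(A,B)^{(1,n)}$ has a deadlocked run that is strong-fair or finite, then $(A,B)^{(1,n+1)}$ has a deadlocked run that is strong-fair or finite.
   Context: A process template is $U=(Q_U,\mathit{init}_U,\Sigma_U,\delta_U)$ with finite states $Q_U$, initial state $\mathit{init}_U$, finite input alphabet $\Sigma_U$ and guarded transitions $\delta_U\subseteq Q_U\times\Sigma_U\times 2^{Q_A\cup Q_B}\times Q_U$; templates $A,B$ have disjoint state sets and disjoint alphabets, and $|B|=|Q_B|$. The system $(A,B)^{(1,n)}$ consists of one copy of $A$ and $n$ copies $B_1,\dots,B_n$ of $B$; a global state $s$ gives each process a local state, a global input $e$ gives each process an input letter, and initially all processes are in their initial states. In a disjunctive system a guard $g$ is satisfied for process $p$ in $s$ iff some process $p'\ne p$ has $s(p')\in g$. A local transition $(q,\sigma,g,q')$ of $p$ is enabled for $(s,e)$ if $s(p)=q$, $e(p)=\sigma$ and $g$ is satisfied for $p$ in $s$; a process is enabled if one of its transitions is; a global step changes the state of exactly one process along an enabled transition. A path is a sequence of configurations $(s_1,e_1,p_1),(s_2,e_2,p_2),\dots$ where $p_t$ makes the step from $s_t$ to $s_{t+1}$ under $e_t$, a configuration $(s,e,\bot)$ occurs (as the last one) exactly when all processes are disabled, and $e_{t+1}(p)=e_t(p)$ for every process $p$ not moving at moment $t$. A run is a maximal path from the initial state. A run is globally deadlocked if it is finite; an infinite run is locally deadlocked if some process is disabled at all moments from some moment on; a run is deadlocked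 if it is globally or locally deadlocked. A run is strong-fair if it is infinite and every process that is enabled infinitely often moves infinitely often. *)

(* Defs.v *)
From mathcomp Require Import all_boot.
Set Implicit Arguments. Unset Strict Implicit. Unset Printing Implicit Defensive.

Record template (Q Sig G : finType) := Template {
  tinit : Q;
  tdelta : {set Q * Sig * {set G} * Q}
}.

Section System.
Variables (QA QB SA SB : finType).
Notation G := (QA + QB)%type.
Variables (A : template QA SA G) (B : template QB SB G).

(* processes of (A,B)^(1,n): None = the copy of A, Some i = B_i *)
Definition proc (n : nat) := option 'I_n.
Definition gstate (n : nat) := (QA * ('I_n -> QB))%type.
Definition ginput (n : nat) := (SA * ('I_n -> SB))%type.

Definition init_state (n : nat) : gstate n := (tinit A, fun _ => tinit B).

Definition loc n (s : gstate n) (p : proc n) : G :=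
  match p with None => inl s.1 | Some i => inr (s.2 i) end.
Definition inp n (e : ginput n) (p : proc n) : (SA + SB)%type :=
  match p with None => inl e.1 | Some i => inr (e.2 i) end.

Definition guard_sat n (s : gstate n) (p : proc n) (g : {set G}) : Prop :=
  exists p' : proc n, p' <> p /\ loc s p' \in g.

Definition enabled n (s : gstate n) (e : ginput n) (p : proc n) : Prop :=
  match p with
  | None => exists g q', (s.1, e.1, g, q') \in tdelta A /\ guard_sat s None g
  | Some i => exists g q', (s.2 i, e.2 i, g, q') \in tdelta B /\ guard_sat s (Some i) g
  end.

Definition all_disabled n (s : gstate n) (e : ginput n) : Prop :=
  forall p : proc n, ~ enabled s e p.

Definition step n (s : gstate n) (e : ginput n) (p : proc n) (s' : gstate n) : Prop :=
  match p with
  | None => exists g q', (s.1, e.1, g, q') \in tdelta A /\ guard_sat s None g /\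
                         s'.1 = q' /\ (forall j, s'.2 j = s.2 j)
  | Some i => exists g q', (s.2 i, e.2 i, g, q') \in tdelta B /\ guard_sat s (Some i) g /\
                           s'.2 i = q' /\ s'.1 = s.1 /\ (forall j, j <> i -> s'.2 j = s.2 j)
  end.

(* A (candidate) run: configurations (rs t, re t, rp t), where rp t = None
   stands for the symbol ⊥.  rlen = None: infinite run; rlen = Some L:
   finite run with configurations at moments 0..L, the last one being
   (rs L, re L, ⊥). Values after moment L are irrelevant. *)
Record run (n : nat) := Run {
  rs : nat -> gstate n;
  re : nat -> ginput n;
  rp : nat -> option (proc n);
  rlen : option nat
}.

Definition in_range (len : option nat) (t : nat) : Prop :=
  match len with None => True | Some L => t < L end.

Definition is_run n (r : run n) : Prop :=
  rs r 0 = init_state n /\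
  (forall t, in_range (rlen r) t ->
     exists p, rp r t = Some p /\ step (rs r t) (re r t) p (rs r t.+1) /\
               (forall p', p' <> p -> inp (re r t.+1) p' = inp (re r t) p')) /\
  (match rlen r with
   | None => True
   | Some L => rp r L = None /\ all_disabled (rs r L) (re r L)
   end).

Definition finite_run n (r : run n) : Prop := exists L, rlen r = Some L.
Definition infinite_run n (r : run n) : Prop := rlen r = None.

Definition moves_at n (r : run n) (p : proc n) (t : nat) : Prop := rp r t = Some p.

Definition globally_deadlocked n (r : run n) : Prop := finite_run r.
Definition locally_deadlocked n (r : run n) : Prop :=
  infinite_run r /\
  exists p : proc n, exists t0, forall t, t0 <= t -> ~ enabled (rs r t) (re r t) p.
Definition deadlocked n (r : run n) : Prop :=
  globally_deadlocked r \/ locally_deadlocked r.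

Definition strong_fair n (r : run n) : Prop :=
  infinite_run r /\
  forall p : proc n,
    (forall t0, exists t, t0 <= t /\ enabled (rs r t) (re r t) p) ->
    (forall t0, exists t, t0 <= t /\ moves_at r p t).

End System.

(* Main.v *)
Require Import Defs.
From mathcomp Require Import all_boot.
From mathcomp Require Import zify.
From Stdlib Require Import Classical FunctionalExtensionality.
Set Implicit Arguments. Unset Strict Implicit. Unset Printing Implicit Defensive.

Section Proof.
Variables (QA QB SA SB : finType).
Local Notation G := (QA + QB)%type.
Variables (A : template QA SA G) (B : template QB SB G).

Definition tr_to (x : G) (a : (SA + SB)%type) (g : {set G}) (y : G) : Prop :=
  match x, a, y with
  | inl q, inl b, inl q' => (q, b, g, q') \in tdelta A
  | inr q, inr b, inr q' => (q, b, g, q') \in tdelta B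
  | _, _, _ => False
  end.

Lemma enabledE n (s : gstate QA QB n) (e : ginput SA SB n) p :
  enabled A B s e p <-> exists g y, tr_to (loc s p) (inp e p) g y /\ guard_sat s p g.
Proof.
case: p => [i|] /=; split.
- by case=> g [q' [H1 H2]]; exists g, (inr q').
- case=> g [[q'|q'] [H1 H2]] //=; by exists g, q'.
- by case=> g [q' [H1 H2]]; exists g, (inl q').
- case=> g [[q'|q'] [H1 H2]] //=; by exists g, q'.
Qed.

Lemma stepE n (s s' : gstate QA QB n) (e : ginput SA SB n) p :
  step A B s e p s' <-> exists g, tr_to (loc s p) (inp e p) g (loc s' p) /\
     guard_sat s p g /\ (forall p', p' <> p -> loc s' p' = loc s p').
Proof.
case: p => [i|] /=; split.
- case=> g [q' [H1 [H2 [H3 [H4 H5]]]]]; exists g; rewrite H3; split=> //; split=> //.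
  case=> [j|] ne /=; last by rewrite H4.
  by rewrite H5 // => eq; apply: ne; rewrite eq.
- case=> g [H1 [H2 H3]]; exists g, (s'.2 i); split=> //; split=> //; split=> //; split.
  + have h : loc s' None = loc s None by apply: H3.
    by case: h.
  + by move=> j ne; have [] := H3 (Some j) (fun h => ne (Some_inj h)).
- case=> g [q' [H1 [H2 [H3 H4]]]]; exists g; rewrite H3; split=> //; split=> //.
  case=> [j|] ne //=; by rewrite H4.
- case=> g [H1 [H2 H3]]; exists g, (s'.1); split=> //; split=> //; split=> //.
  move=> j; have h : loc s' (Some j) = loc s (Some j) by apply: H3.
  by case: h.
Qed.

Lemma step_other n (s s' : gstate QA QB n) (e : ginput SA SB n) p p' :
  step A B s e p s' -> p' <> p -> loc s' p' = loc s p'.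
Proof. by move=> /stepE [g [_ [_ H]]]; apply: H. Qed.

Lemma step_enabled n (s s' : gstate QA QB n) (e : ginput SA SB n) p :
  step A B s e p s' -> enabled A B s e p.
Proof. by move=> /stepE [g [H1 [H2 _]]]; apply/enabledE; exists g, (loc s' p). Qed.

Lemma en_back2 n m (s1 s2 : gstate QA QB n) (e1 e2 : ginput SA SB n) p
  (S : gstate QA QB m) (E : ginput SA SB m) P :
  loc S P = loc s1 p -> loc S P = loc s2 p -> inp E P = inp e1 p -> inp E P = inp e2 p ->
  (forall P', P' <> P -> exists p', p' <> p /\ (loc s1 p' = loc S P' \/ loc s2 p' = loc S P')) ->
  enabled A B S E P -> enabled A B s1 e1 p \/ enabled A B s2 e2 p.
Proof.
move=> h1 h1' h2 h2' h3 /enabledE [g [y [H1 [P' [ne Hin]]]]].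
have [p' [ne' [eq|eq]]] := h3 P' ne.
- left; apply/enabledE; exists g, y; rewrite -h1 -h2; split=> //; exists p'; by rewrite eq.
- right; apply/enabledE; exists g, y; rewrite -h1' -h2'; split=> //; exists p'; by rewrite eq.
Qed.

Lemma en_back n m (s : gstate QA QB n) (e : ginput SA SB n) p
  (S : gstate QA QB m) (E : ginput SA SB m) P :
  loc S P = loc s p -> inp E P = inp e p ->
  (forall P', P' <> P -> exists p', p' <> p /\ loc s p' = loc S P') ->
  enabled A B S E P -> enabled A B s e p.
Proof.
move=> h1 h2 h3 hen.
have [] // := en_back2 h1 h1 h2 h2 _ hen.
by move=> P' ne; have [p' [? ?]] := h3 P' ne; exists p'; split=> //; left.
Qed.

Lemma step_tr n m (s s' : gstate QA QB n) (e : ginput SA SB n) p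
  (S S' : gstate QA QB m) (E : ginput SA SB m) P :
  step A B s e p s' -> loc S P = loc s p -> inp E P = inp e p ->
  (forall p', p' <> p -> exists P', P' <> P /\ loc S P' = loc s p') ->
  loc S' P = loc s' p -> (forall P', P' <> P -> loc S' P' = loc S P') ->
  step A B S E P S'.
Proof.
move=> /stepE [g [H1 [[p' [ne Hin]] H3]]] h1 h2 h3 h4 h5.
apply/stepE; exists g; rewrite h1 h2 h4; split=> //; split=> //.
have [P' [ne' eq']] := h3 p' ne; exists P'; by rewrite eq'.
Qed.

Lemma pigeon n (h : 'I_n -> QB) : #|QB|.+1 <= n -> exists i k, k <> i /\ h k = h i.
Proof.
move=> hn; apply: NNPP => hc.
have inj : injective h.
  move=> a b hab; case: (eqVneq a b) => // ne.
  by exfalso; apply: hc; exists b, a; split => //; apply/eqP.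
have := leq_card h inj; rewrite card_ord; lia.
Qed.

Lemma ex_bound (I : finType) (Q : I -> nat -> Prop) :
  (forall j, exists tj, forall t, tj <= t -> Q j t) -> exists T, forall j t, T <= t -> Q j t.
Proof.
move=> H.
suff: forall l : seq I, exists T, forall j, j \in l -> forall t, T <= t -> Q j t.
  by case/(_ (enum I)) => T HT; exists T => j t; apply: HT; rewrite mem_enum.
elim=> [|a l [T HT]]; first by exists 0.
have [ta Ha] := H a.
exists (maxn ta T) => j; rewrite inE => /orP [/eqP -> | hj] t ht.
- by apply: Ha; apply: leq_trans ht; apply: leq_maxl.
- by apply: HT => //; apply: leq_trans ht; apply: leq_maxr.
Qed.

Section Cons.
Variables (n : nat) (r : run QA QB SA SB n) (i : 'I_n).

Definition ext (T : Type) (h : 'I_n -> T) (x : T) : 'I_n.+1 -> T :=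
  fun K => if unlift ord_max K is Some j then h j else x.
Definition mk (s : gstate QA QB n) (x : QB) : gstate QA QB n.+1 := (s.1, ext s.2 x).
Definition mkE (e : ginput SA SB n) (a : SB) : ginput SA SB n.+1 := (e.1, ext e.2 a).
Definition emb (p : proc n) : proc n.+1 := omap (lift ord_max) p.
Definition prj (P : proc n.+1) : proc n :=
  if P is Some K then Some (odflt i (unlift ord_max K)) else None.

Lemma ext_lift T (h : 'I_n -> T) x j : ext h x (lift ord_max j) = h j.
Proof. by rewrite /ext liftK. Qed.
Lemma ext_max T (h : 'I_n -> T) x : ext h x ord_max = x.
Proof. by rewrite /ext unlift_none. Qed.
Lemma loc_emb s x p : loc (mk s x) (emb p) = loc s p.
Proof. by case: p => [j|] //=; rewrite ext_lift. Qed.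
Lemma loc_max s x : loc (mk s x) (Some ord_max) = inr x.
Proof. by rewrite /= ext_max. Qed.
Lemma inp_emb e x p : inp (mkE e x) (emb p) = inp e p.
Proof. by case: p => [j|] //=; rewrite ext_lift. Qed.
Lemma inp_max e x : inp (mkE e x) (Some ord_max) = inr x.
Proof. by rewrite /= ext_max. Qed.
Lemma emb_inj : injective emb.
Proof. case=> [a|] [b|] //= h; by rewrite (@lift_inj _ ord_max a b (Some_inj h)). Qed.
Lemma emb_max p : emb p <> Some ord_max.
Proof. case: p => [j|] //= h; have := neq_lift ord_max j; by rewrite (Some_inj h) eqxx. Qed.
Lemma procP (P : proc n.+1) : P = Some ord_max \/ exists p, P = emb p.
Proof.
case: P => [K|]; last by right; exists None.
by case: (unliftP ord_max K) => [j ->|->]; [right; exists (Some j)|left].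
Qed.
Lemma prj_emb p : prj (emb p) = p.
Proof. by case: p => [j|] //=; rewrite liftK. Qed.
Lemma prj_max : prj (Some ord_max) = Some i.
Proof. by rewrite /= unlift_none. Qed.

Fixpoint fT (T : nat) : nat * bool :=
  match T with
  | 0 => (0, false)
  | T'.+1 => let: (t, ph) := fT T' in
             if ~~ ph && (rp r t == Some (Some i)) then (t, true) else (t.+1, false)
  end.

Fixpoint cnt (t : nat) : nat :=
  if t is t'.+1 then cnt t' + (rp r t' == Some (Some i)) else 0.

Definition newS T : gstate QA QB n.+1 :=
  mk (rs r (if (fT T).2 then (fT T).1.+1 else (fT T).1)) ((rs r (fT T).1).2 i).
Definition newE T : ginput SA SB n.+1 :=
  mkE (re r (if (fT T).2 then (fT T).1.+1 else (fT T).1)) ((re r (fT T).1).2 i).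
Definition newP T : option (proc n.+1) :=
  if (fT T).2 then Some (Some ord_max) else omap emb (rp r (fT T).1).
Definition newlen := omap (fun L => L + cnt L) (rlen r).
Definition newrun := @Run QA QB SA SB n.+1 newS newE newP newlen.

Lemma fT_S T : fT T.+1 = if ~~ (fT T).2 && (rp r (fT T).1 == Some (Some i))
                         then ((fT T).1, true) else ((fT T).1.+1, false).
Proof. by rewrite /=; case: (fT T). Qed.

Lemma fT_ph T : (fT T).2 -> rp r (fT T).1 = Some (Some i).
Proof.
case: T => [//|T]; rewrite fT_S; case: ifP => //= /andP [_ /eqP] //.
Qed.

Lemma fT_le1 T : (fT T).1 <= (fT T.+1).1.
Proof. by rewrite fT_S; case: ifP => //= _; apply: leqnSn. Qed.

Lemma fT_mono T T' : T <= T' -> (fT T).1 <= (fT T').1.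
Proof.
move=> /subnK <-; elim: (T' - T) => [|d IH] //.
by rewrite addSn; apply: leq_trans IH (fT_le1 _).
Qed.

Lemma fT_leT T : (fT T).1 <= T.
Proof.
elim: T => // T IH; rewrite fT_S; case: ifP => //= _; exact: leqW.
Qed.

Lemma fT_cnt t : fT (t + cnt t) = (t, false).
Proof.
elim: t => [|t IH]; first by [].
rewrite [cnt t.+1]/=.
case E: (rp r t == Some (Some i)).
- have -> : t.+1 + (cnt t + true) = (t + cnt t).+2 by lia.
  by rewrite fT_S fT_S IH /= E.
- have -> : t.+1 + (cnt t + false) = (t + cnt t).+1 by lia.
  by rewrite fT_S IH /= E.
Qed.

Lemma fT_lt t T : T < t + cnt t -> (fT T).1 < t.
Proof.
elim: t T => [|t IH] T //=.
move=> hT; case: (ltnP T (t + cnt t)) => h; first exact: ltnW (IH T h).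
case: (eqVneq T (t + cnt t)) => [->|ne]; first by rewrite fT_cnt.
case E: (rp r t == Some (Some i)) hT => /= hT.
- have -> : T = (t + cnt t).+1 by move: ne; lia.
  by rewrite fT_S fT_cnt /= E.
- move: ne; lia.
Qed.

Lemma newS_false T t : fT T = (t, false) -> newS T = mk (rs r t) ((rs r t).2 i).
Proof. by rewrite /newS => ->. Qed.
Lemma newS_true T t : fT T = (t, true) -> newS T = mk (rs r t.+1) ((rs r t).2 i).
Proof. by rewrite /newS => ->. Qed.
Lemma newE_false T t : fT T = (t, false) -> newE T = mkE (re r t) ((re r t).2 i).
Proof. by rewrite /newE => ->. Qed.
Lemma newE_true T t : fT T = (t, true) -> newE T = mkE (re r t.+1) ((re r t).2 i).
Proof. by rewrite /newE => ->. Qed.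
Lemma newP_false T t : fT T = (t, false) -> newP T = omap emb (rp r t).
Proof. by rewrite /newP => ->. Qed.
Lemma newP_true T t : fT T = (t, true) -> newP T = Some (Some ord_max).
Proof. by rewrite /newP => ->. Qed.


Lemma new_step T : is_run A B r -> in_range (rlen r) (fT T).1 ->
  exists P, newP T = Some P /\ step A B (newS T) (newE T) P (newS T.+1) /\
    (forall P', P' <> P -> inp (newE T.+1) P' = inp (newE T) P').
Proof.
move=> [_ [Hst _]].
case E: (fT T) => [t ph] /= hr.
have [p [hp [hs hi]]] := Hst t hr.
case: ph E => E.
- have := @fT_ph T; rewrite E hp => /(_ isT) [?]; subst p.
  have E' : fT T.+1 = (t.+1, false) by rewrite fT_S E.
  exists (Some ord_max).
  rewrite (newP_true E) (newS_true E) (newS_false E') (newE_true E) (newE_false E').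
  split=> //; split.
  + apply: (step_tr hs); rewrite ?loc_max ?inp_max //.
    * move=> p' ne; exists (emb p'); split; first exact: emb_max.
      by rewrite loc_emb (step_other hs ne).
    * move=> P' ne; case: (procP P') => [//|[p'' ->]]; by rewrite !loc_emb.
  + move=> P' ne; case: (procP P') => [//|[p'' ->]]; by rewrite !inp_emb.
- exists (emb p); rewrite (newP_false E) hp; split=> //.
  case: (eqVneq p (Some i)) => [ep|ne].
  + subst p.
    have E' : fT T.+1 = (t, true) by rewrite fT_S E /= hp eqxx.
    rewrite (newS_false E) (newS_true E') (newE_false E) (newE_true E'); split.
    * apply: (step_tr hs); rewrite ?loc_emb ?inp_emb //.
      - move=> p' ne; exists (emb p'); split; first by move/emb_inj.
        by rewrite loc_emb.
      - move=> P' ne; case: (procP P') => [->|[p'' Ep]]; first by rewrite !loc_max.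
        subst P'; rewrite !loc_emb; apply: (step_other hs) => h; apply: ne; by rewrite h.
    * move=> P' ne; case: (procP P') => [->|[p'' Ep]]; first by rewrite !inp_max.
      subst P'; rewrite !inp_emb; apply: hi => h; apply: ne; by rewrite h.
  + move/eqP: ne => ne; have ne' : (Some p == Some (Some i)) = false by apply/eqP => -[] /ne.
    have E' : fT T.+1 = (t.+1, false) by rewrite fT_S E /= hp ne'.
    rewrite (newS_false E) (newS_false E') (newE_false E) (newE_false E'); split.
    * apply: (step_tr hs); rewrite ?loc_emb ?inp_emb //.
      - move=> p' ne2; exists (emb p'); split; first by move/emb_inj.
        by rewrite loc_emb.
      - move=> P' ne2; case: (procP P') => [->|[p'' Ep]].
          rewrite !loc_max.
          have := step_other hs (p' := Some i) (fun h => ne (esym h)).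
          by move=> /= [->].
        subst P'; rewrite !loc_emb; apply: (step_other hs) => h; apply: ne2; by rewrite h.
    * move=> P' ne2; case: (procP P') => [->|[p'' Ep]].
        rewrite !inp_max.
        have := hi (Some i) (fun h => ne (esym h)).
        by move=> /= [->].
      subst P'; rewrite !inp_emb; apply: hi => h; apply: ne2; by rewrite h.
Qed.

Lemma sync_back_emb (s : gstate QA QB n) (e : ginput SA SB n) p :
  (p <> Some i \/ exists k, k <> i /\ s.2 k = s.2 i) ->
  enabled A B (mk s (s.2 i)) (mkE e (e.2 i)) (emb p) -> enabled A B s e p.
Proof.
move=> hk; apply: en_back; rewrite ?loc_emb ?inp_emb //.
move=> P' ne; case: (procP P') => [->|[p'' Ep]].
- case: (eqVneq p (Some i)) => [ep|np].
  + subst p; case: hk => [//|[k [nk ek]]].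
    exists (Some k); split; first by move=> [].
    by rewrite loc_max /= ek.
  + exists (Some i); split; [by move=> h; move: np; rewrite h eqxx | by rewrite loc_max].
- subst P'; exists p''; split; last by rewrite loc_emb.
  by move=> h; apply: ne; rewrite h.
Qed.

Lemma sync_back_max (s : gstate QA QB n) (e : ginput SA SB n) k :
  k <> i -> s.2 k = s.2 i ->
  enabled A B (mk s (s.2 i)) (mkE e (e.2 i)) (Some ord_max) -> enabled A B s e (Some i).
Proof.
move=> nk ek; apply: en_back; rewrite ?loc_max ?inp_max //.
move=> P' ne; case: (procP P') => [//|[p'' Ep]]; subst P'.
case: (eqVneq p'' (Some i)) => [ep|np].
- subst p''; exists (Some k); split; first by move=> [].
  by rewrite loc_emb /= ek.
- by exists p''; split; [by move=> h; move: np; rewrite h eqxx | rewrite loc_emb].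
Qed.

Lemma inter_back (s s' : gstate QA QB n) (e e' : ginput SA SB n) p :
  step A B s e (Some i) s' -> p <> Some i -> inp e' p = inp e p ->
  enabled A B (mk s' (s.2 i)) (mkE e' (e.2 i)) (emb p) ->
  enabled A B s e p \/ enabled A B s' e' p.
Proof.
move=> hs ne hin; apply: en_back2; rewrite ?loc_emb ?inp_emb //.
- exact: step_other hs ne.
- move=> P' ne'; case: (procP P') => [->|[p'' Ep]].
  + by exists (Some i); split; [move=> h; apply: ne; rewrite h | left; rewrite loc_max].
  + subst P'; exists p''; split; last by right; rewrite loc_emb.
    by move=> h; apply: ne'; rewrite h.
Qed.

Lemma new_run : is_run A B r ->
  (forall L, rlen r = Some L -> exists k, k <> i /\ (rs r L).2 k = (rs r L).2 i) ->
  is_run A B newrun.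
Proof.
move=> H Hk; have H' := H; case: H => [h0 [Hst Hend]]; split.
- rewrite /= (newS_false (T:=0) (t:=0) erefl) h0 /init_state /mk /=.
  congr pair; apply: functional_extensionality => K; by rewrite /ext; case: unlift.
split.
- move=> T; rewrite /= /newlen => hT; apply: new_step H' _.
  move: hT; case: (rlen r) => [L|] //= hT; exact: fT_lt.
- rewrite /= /newlen; case Er: (rlen r) => [L|] //; rewrite Er in Hend.
  case: Hend => hN hD; rewrite /= (newP_false (fT_cnt L)) hN; split=> //.
  have [k [nk ek]] := Hk L Er.
  rewrite (newS_false (fT_cnt L)) (newE_false (fT_cnt L)).
  move=> P hen; case: (procP P) => [Ep|[p Ep]]; subst P.
  + exact: hD _ (sync_back_max nk ek hen).
  + apply: (hD p); apply: sync_back_emb hen; right; by exists k.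
Qed.


Lemma case1 : is_run A B r -> rlen r = None -> strong_fair A B r -> locally_deadlocked A B r ->
  (forall t0, exists t, t0 <= t /\ rp r t = Some (Some i)) ->
  deadlocked A B newrun /\ strong_fair A B newrun.
Proof.
move=> Hr inf [_ Hf] [_ [p0 [t0 Hd]]] Hinf.
have [_ [Hst _]] := Hr.
have hin : forall t, in_range (rlen r) t by move=> t; rewrite inf.
have back : forall T p, p <> Some i -> enabled A B (newS T) (newE T) (emb p) ->
   enabled A B (rs r (fT T).1) (re r (fT T).1) p \/
   enabled A B (rs r (fT T).1.+1) (re r (fT T).1.+1) p.
{ move=> T p ne; case E: (fT T) => [t [|]] /=.
  - rewrite (newS_true E) (newE_true E).
    have := @fT_ph T; rewrite E => /(_ isT) hpi.
    have [p1 [hp [hs hi]]] := Hst t (hin t).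
    rewrite hpi in hp; case: hp => ?; subst p1.
    exact: inter_back hs ne (hi p ne).
  - rewrite (newS_false E) (newE_false E) => h; left; apply: sync_back_emb h; by left. }
have ne0 : p0 <> Some i.
{ move=> ep; have [t [ht hp]] := Hinf t0.
  have [p1 [hp1 [hs _]]] := Hst t (hin t).
  rewrite hp in hp1; case: hp1 => ?; subst p1.
  apply: (Hd t ht); rewrite ep; exact: step_enabled hs. }
have infn : infinite_run newrun by rewrite /infinite_run /= /newlen inf.
split.
- right; split=> //; exists (emb p0), (t0 + cnt t0) => T hT hen.
  have := fT_mono hT; rewrite fT_cnt /= => ht.
  case: (back T p0 ne0 hen) => h; [exact: Hd _ ht h | exact: Hd _ (leqW ht) h].
- split=> // P hinf T0.
  case: (procP P) hinf => [->|[p ->]] hinf.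
  + have [t [ht hp]] := Hinf T0.
    exists (t + cnt t).+1; split; first by lia.
    have E' : fT (t + cnt t).+1 = (t, true) by rewrite fT_S fT_cnt /= hp eqxx.
    by rewrite /moves_at /= (newP_true E').
  + case: (eqVneq p (Some i)) => [->|ne].
    * have [t [ht hp]] := Hinf T0.
      exists (t + cnt t); split; first by lia.
      by rewrite /moves_at /= (newP_false (fT_cnt t)) hp.
    * move/eqP: ne => ne.
      have oen : forall t0, exists t, t0 <= t /\ enabled A B (rs r t) (re r t) p.
      { move=> t1; have [T [hT hen]] := hinf (t1 + cnt t1).
        have := fT_mono hT; rewrite fT_cnt /= => ht.
        case: (back T p ne hen) => h; [exists (fT T).1 | exists (fT T).1.+1]; split => //.
        exact: leqW. }
      have [t [ht hp]] := Hf p oen T0.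
      exists (t + cnt t); split; first by lia.
      by rewrite /moves_at /= (newP_false (fT_cnt t)) hp.
Qed.

Lemma case2 T1 k : is_run A B r -> rlen r = None -> strong_fair A B r ->
  locally_deadlocked A B r ->
  k <> i -> (forall t, T1 <= t -> forall j, rp r t <> Some (Some j)) ->
  (forall t, T1 <= t -> (rs r t).2 k = (rs r t).2 i) ->
  deadlocked A B newrun /\ strong_fair A B newrun.
Proof.
move=> Hr inf [_ Hf] [_ [p0 [t0 Hd]]] nk Hno Hk.
have tail : forall d, fT (T1 + cnt T1 + d) = (T1 + d, false).
{ elim=> [|d IH]; first by rewrite !addn0 fT_cnt.
  rewrite addnS fT_S IH /=.
  have -> : (rp r (T1 + d) == Some (Some i)) = false.
    by apply/eqP; apply: Hno; apply: leq_addr.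
  by rewrite addnS. }
have back : forall d P, enabled A B (newS (T1 + cnt T1 + d)) (newE (T1 + cnt T1 + d)) P ->
  enabled A B (rs r (T1 + d)) (re r (T1 + d)) (prj P).
{ move=> d P; rewrite (newS_false (tail d)) (newE_false (tail d)).
  have ek := Hk (T1 + d) (leq_addr _ _).
  case: (procP P) => [->|[p ->]].
  - rewrite prj_max; exact: sync_back_max nk ek.
  - rewrite prj_emb => h; apply: sync_back_emb h; right; by exists k. }
have infn : infinite_run newrun by rewrite /infinite_run /= /newlen inf.
split.
- right; split=> //; exists (emb p0), (T1 + cnt T1 + t0) => T hT hen.
  have := back (T - (T1 + cnt T1)); rewrite subnKC; last by lia.
  move=> /(_ _ hen); rewrite prj_emb; apply: Hd; lia.
- split=> // P hinf T0.
  have oen : forall t1, exists t, t1 <= t /\ enabled A B (rs r t) (re r t) (prj P).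
  { move=> t1; have [T [hT hen]] := hinf (T1 + cnt T1 + t1).
    exists (T1 + (T - (T1 + cnt T1))); split; first by lia.
    apply: back; rewrite subnKC //; lia. }
  have [t [ht hp]] := Hf _ oen (T1 + T0).
  case E: (prj P) hp => [j|] hp.
  + by exfalso; apply: (Hno t _ j hp); lia.
  + have EP : P = None.
    { case: (procP P) E => [->|[p ->]]; first by rewrite prj_max.
      by rewrite prj_emb => ->. }
    exists (T1 + cnt T1 + (t - T1)); split; first by lia.
    rewrite /moves_at /= (newP_false (tail _)).
    have -> : T1 + (t - T1) = t by lia.
    by rewrite hp EP.
Qed.

End Cons.
End Proof.

Theorem mainTheorem10 (QA QB SA SB : finType)
  (A : template QA SA (QA + QB)%type) (B : template QB SB (QA + QB)%type) (n : nat) :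
  #|QB|.+1 <= n ->
  (exists r : run QA QB SA SB n,
      is_run A B r /\ deadlocked A B r /\ (strong_fair A B r \/ finite_run r)) ->
  (exists r : run QA QB SA SB n.+1,
      is_run A B r /\ deadlocked A B r /\ (strong_fair A B r \/ finite_run r)).
Proof.
move=> hn [r [Hr [Hd Hf]]].
case Er: (rlen r) => [L|].
- have [i [k [nk ek]]] := pigeon (rs r L).2 hn.
  exists (newrun r i); split.
    by apply: new_run => // L'; rewrite Er => -[<-]; exists k.
  have fin : finite_run (newrun r i) by exists (L + cnt r i L); rewrite /= /newlen Er.
  by split; [left | right].
- have Hf' : strong_fair A B r by case: Hf => // -[L']; rewrite Er.
  have Hd' : locally_deadlocked A B r by case: Hd => // -[L']; rewrite Er.
  case: (classic (exists i, forall t0, exists t, t0 <= t /\ rp r t = Some (Some i)))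
    => [[i Hi]|hno].
  + exists (newrun r i); split; first by apply: new_run => // L'; rewrite Er.
    have [? ?] := case1 Hr Er Hf' Hd' Hi; split=> //; by left.
  + have H1 : forall j, exists tj, forall t, tj <= t -> rp r t <> Some (Some j).
    { move=> j; apply: NNPP => hn'; apply: hno; exists j => t0; apply: NNPP => h2.
      apply: hn'; exists t0 => t ht e; apply: h2; by exists t. }
    have [T1 HT1] := ex_bound H1.
    have const : forall d j, (rs r (T1 + d)).2 j = (rs r T1).2 j.
    { elim=> [|d IH] j; first by rewrite addn0.
      have [_ [Hst _]] := Hr.
      have hin : forall t, in_range (rlen r) t by move=> t; rewrite Er.
      have [p [hp [hs _]]] := Hst (T1 + d) (hin (T1 + d)).
      have nej : p <> Some j.
        by move=> ep; apply: (HT1 j (T1 + d) (leq_addr _ _)); rewrite hp ep.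
      have := step_other hs (p' := Some j) (fun h => nej (esym h)).
      rewrite addnS /= => -[->]; exact: IH. }
    have [i [k [nk ek]]] := pigeon (rs r T1).2 hn.
    have Hk : forall t, T1 <= t -> (rs r t).2 k = (rs r t).2 i.
    { move=> t ht; rewrite -(subnKC ht) !const; exact: ek. }
    exists (newrun r i); split; first by apply: new_run => // L'; rewrite Er.
    have [? ?] := case2 Hr Er Hf' Hd' nk (fun t ht j => HT1 j t ht) Hk.
    split=> //; by left.
Qed.
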